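(* Let $R$ be a field and $H$ a Hopf algebra over $R$ which is local and cocommutative. Let $S$ be a finite faithful $H$-extension of $R$ with $\mathrm{rank}_R(H)=\mathrm{rank}_R(S)$. Then $S/R$ is a Hopf-Galois extension with $H$ if and only if the Hopfological homology $S^H/IS$ of $S$ is zero.
   Context: $S$ is a finite $H$-extension of $R$ if $S$ is a finite-dimensional $R$-algebra which is a left $H$-module algebra with $S^H=R$, where $S^H=\{s\in S: hs=\varepsilon(h)s\ \forall h\in H\}$; it is faithful if $hs=0$ for all $s\in S$ implies $h=0$. $I=\{\lambda\in H: h\lambda=\varepsilon(h)\lambda\ \forall h\}$ is the set of left integrals and $IS$ is the $R$-subspace spanned by $\lambda s$, $\lambda\in I$, $s\in S$. $S/R$ is a Hopf-Galois extension with $H$ if the map $j:S\# H\to \mathrm{End}_R(S)$, $j(s\otimes h)(t)=s\,h(t)$, is bijective (where $S\#H$ is the smash product over $R$). *)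

(* Defs.v *)
(* Finite-dimensional Hopf algebras over a field R,
   with tensor products H (x) H and S (x) H represented in coordinates
   w.r.t. the canonical bases [vbasis fullv]. *)
From HB Require Import structures.
From mathcomp Require Import all_boot all_order all_algebra all_field.
Set Implicit Arguments. Unset Strict Implicit. Unset Printing Implicit Defensive.
Import GRing.Theory.
Local Open Scope ring_scope.

Section Hopf.
Variables (R : fieldType) (H : falgType R).
Local Notation d := (\dim {:H}).

Definition bvec (V : vectType R) (i : 'I_(\dim {:V})) : V := tnth (vbasis {:V}) i.

Definition tens (a b : H) : 'M[R]_(d, d) :=
  \matrix_(i, j) (coord (vbasis {:H}) i a * coord (vbasis {:H}) j b).

Definition mulT (X Y : 'M[R]_(d, d)) : 'M[R]_(d, d) :=
  \sum_(i < d) \sum_(j < d) \sum_(k < d) \sum_(l < d)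
     (X i j * Y k l) *: tens (bvec i * bvec k) (bvec j * bvec l).

Definition contr (V : lmodType R) (X : 'M[R]_(d, d)) (phi : H -> H -> V) : V :=
  \sum_(i < d) \sum_(j < d) X i j *: phi (bvec i) (bvec j).

Record hopf_algebra := HopfAlgebra {
  comul : H -> 'M[R]_(d, d);
  counit : H -> R;
  antipode : H -> H;
  comul_lin : forall (a : R) (u v : H), comul (a *: u + v) = a *: comul u + comul v;
  counit_lin : forall (a : R) (u v : H), counit (a *: u + v) = a * counit u + counit v;
  antipode_lin : forall (a : R) (u v : H), antipode (a *: u + v) = a *: antipode u + antipode v;
  comul1 : comul 1 = tens 1 1;
  comulM : forall a b, comul (a * b) = mulT (comul a) (comul b);
  counit1 : counit 1 = 1;
  counitM : forall a b, counit (a * b) = counit a * counit b;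
  (* (Delta (x) id) Delta = (id (x) Delta) Delta, coordinatewise in H(x)H(x)H *)
  coassoc : forall h (i j k : 'I_d),
    \sum_(a < d) comul h a k * comul (bvec a) i j =
    \sum_(b < d) comul h i b * comul (bvec b) j k;
  counitL : forall h, contr (comul h) (fun x y => counit x *: y) = h;
  counitR : forall h, contr (comul h) (fun x y => counit y *: x) = h;
  antipodeL : forall h, contr (comul h) (fun x y => antipode x * y) = (counit h)%:A;
  antipodeR : forall h, contr (comul h) (fun x y => x * antipode y) = (counit h)%:A
}.

Definition cocommutative (HA : hopf_algebra) := forall h, (comul HA h)^T = comul HA h.

Variable HA : hopf_algebra.
Variable S : falgType R.
Variable act : H -> S -> S.

Record module_algebra : Prop := {
  act_linl : forall (a : R) h k s, act (a *: h + k) s = a *: act h s + act k s;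
  act_linr : forall (a : R) h s t, act h (a *: s + t) = a *: act h s + act h t;
  act1 : forall s, act 1 s = s;
  actM : forall h k s, act (h * k) s = act h (act k s);
  act_mul : forall h s t, act h (s * t) = contr (comul HA h) (fun x y => act x s * act y t);
  act_unit : forall h, act h 1 = (counit HA h)%:A
}.

Definition invariant (s : S) := forall h, act h s = counit HA h *: s.

Definition H_extension :=
  module_algebra /\ (forall s, invariant s <-> exists r : R, s = r%:A).

Definition faithful_action := forall h, (forall s, act h s = 0) -> h = 0.

Definition left_integral (l : H) := forall h, h * l = counit HA h *: l.

Definition in_IS (s : S) :=
  exists n (c : 'I_n -> R) (l : 'I_n -> H) (t : 'I_n -> S),
    (forall k, left_integral (l k)) /\ s = \sum_(k < n) c k *: act (l k) (t k).

(* the Hopfological homology S^H / IS is zero, i.e. S^H is contained in IS *)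
Definition hopfological_homology_zero := forall s, invariant s -> in_IS s.

(* j : S # H -> End_R(S), j(s (x) h)(t) = s h(t), with S # H = S (x) H in
   coordinates *)
Definition galois_map (X : 'M[R]_(\dim {:S}, d)) : 'End(S) :=
  linfun (fun t : S => \sum_(i < \dim {:S}) \sum_(j < d) X i j *: (bvec i * act (bvec j) t)).

Definition hopf_galois := bijective galois_map.

End Hopf.

(* local ring: the non-units form an additive subgroup (equivalently,
   a unique maximal (left) ideal) *)
Definition local_algebra (R : fieldType) (A : falgType R) :=
  forall x y : A, x \isn't a GRing.unit -> y \isn't a GRing.unit -> (x + y) \isn't a GRing.unit.

(* Main.v *)
Require Import Defs.
From HB Require Import structures.
From mathcomp Require Import all_boot all_order all_algebra all_field.
Set Implicit Arguments. Unset Strict Implicit. Unset Printing Implicit Defensive.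
Import GRing.Theory.
Local Open Scope ring_scope.
Section LinHelp.
Variables (R : fieldType) (U V : lmodType R) (f : U -> V).
Hypothesis Hf : forall a u v, f (a *: u + v) = a *: f u + f v.
Definition mkLin : {linear U -> V} := HB.pack f (GRing.isLinear.Build R U V *:%R f Hf).
Lemma lin0 : f 0 = 0. Proof. exact: (linear0 mkLin). Qed.
Lemma linD u v : f (u + v) = f u + f v. Proof. exact: (linearD mkLin). Qed.
Lemma linZ a u : f (a *: u) = a *: f u. Proof. by rewrite -[a *: u]addr0 Hf lin0 addr0. Qed.
Lemma linB u v : f (u - v) = f u - f v. Proof. exact: (linearB mkLin). Qed.
Lemma lin_sum I (r : seq I) (P : pred I) (F : I -> U) :
  f (\sum_(i <- r | P i) F i) = \sum_(i <- r | P i) f (F i).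
Proof. exact: (linear_sum mkLin). Qed.
End LinHelp.

Lemma linfunE' (R : fieldType) (aT rT : vectType R) (f : aT -> rT)
  (Hf : forall a u v, f (a *: u + v) = a *: f u + f v) x : linfun f x = f x.
Proof. exact: (lfunE (mkLin Hf) x). Qed.

Section Inv.
Variables (R : fieldType) (H : falgType R) (V : vectType R).
Variables (m : H -> V -> V) (eps : H -> R).
Hypotheses (m_linl : forall a h k v, m (a *: h + k) v = a *: m h v + m k v)
  (m_linr : forall h a v w, m h (a *: v + w) = a *: m h v + m h w)
  (m1 : forall v, m 1 v = v) (mM : forall h k v, m (h * k) v = m h (m k v))
  (eps_lin : forall a h k, eps (a *: h + k) = a * eps h + eps k)
  (eps1 : eps 1 = 1) (epsM : forall h k, eps (h * k) = eps h * eps k)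
  (loc : local_algebra H).

Let eps_lin' : forall a h k, (eps : H -> R^o) (a *: h + k) = a *: (eps h : R^o) + eps k.
Proof. exact: eps_lin. Qed.

Lemma eps_unit u : u \is a GRing.unit -> eps u != 0.
Proof.
move=> Uu; apply/eqP=> e0.
have := epsM u^-1 u; rewrite mulVr // eps1 e0 mulr0 => /eqP.
by rewrite oner_eq0.
Qed.

Lemma exists_invariant (U : {vspace V}) :
  U != 0%VS -> (forall h u, u \in U -> m h u \in U) ->
  exists w, [/\ w \in U, w != 0 & forall h, m h w = eps h *: w].
Proof.
move: {2}(\dim U) (leqnn (\dim U)) => k; elim: k U => [|k IH] U.
  by rewrite leqn0 dimv_eq0 => /eqP-> ; rewrite eqxx.
move=> dimU U0 stU.
set w := vpick U.
have wU : w \in U by exact: memv_pick.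
have w0 : w != 0 by rewrite vpick0.
pose g := fun x : H => m x w - eps x *: w.
have g_lin : forall a x y, g (a *: x + y) = a *: g x + g y.
  move=> a x y; rewrite /g m_linl eps_lin scalerDl -scalerA scalerBr.
  by rewrite addrACA opprD.
pose Nw := limg (linfun g).
have NwE : forall v, v \in Nw -> exists x, v = g x.
  move=> v /memv_imgP [x _ ->]; exists x; exact: linfunE'.
have gNw : forall x, g x \in Nw.
  by move=> x; rewrite -(linfunE' g_lin); apply: memv_img; apply: memvf.
have NwU : (Nw <= U)%VS.
  apply/subvP=> v /NwE [x ->]; rewrite /g memvB ?memvZ ?stU //.
have stN : forall h u, u \in Nw -> m h u \in Nw.
  move=> h u /NwE [x ->]; rewrite /g (linB (m_linr h)) (linZ (m_linr h)).
  have -> : eps x *: m h w = eps x *: g h + (eps x * eps h) *: w.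
    by rewrite /g scalerBr scalerA subrK.
  have -> : m h (m x w) = g (h * x) + (eps h * eps x) *: w.
    by rewrite /g mM epsM subrK.
  rewrite mulrC opprD addrACA subrr addr0.
  by rewrite memvB ?memvZ ?gNw.
have [N0|N0] := eqVneq Nw 0%VS.
  exists w; split=> // h; apply/eqP; rewrite -subr_eq0; apply/eqP.
  by have := gNw h; rewrite N0 memv0 => /eqP.
have [lt|ge] := ltnP (\dim Nw) (\dim U).
  have [w' [w'N w'0 w'inv]] := IH Nw (leq_trans (ltnSn _) (leq_trans lt dimU)) N0 stN.
  by exists w'; split=> //; apply: (subvP NwU).
have eNU : Nw = U by apply/eqP; rewrite eqEdim NwU ge.
have := wU; rewrite -eNU => /NwE [x wx].
pose u := (1 + eps x) *: (1 : H) - x.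
have mu0 : m u w = 0.
  have mlw : forall a h k, m (a *: h + k) w = a *: m h w + m k w by move=> *; apply: m_linl.
  have -> : u = (1 + eps x) *: 1 + (-1) *: x by rewrite /u scaleN1r.
  rewrite mlw (linZ mlw) m1 scaleN1r.
  have -> : m x w = w + eps x *: w by rewrite {2}wx /g subrK.
  by rewrite scalerDl scale1r opprD addrACA !subrr addr0.
have uU : u \is a GRing.unit.
  apply/negPn/negP=> nu.
  pose y := x - eps x *: (1 : H).
  have ey : eps y = 0.
    have -> : y = (- eps x) *: 1 + x by rewrite /y addrC scaleNr.
    by rewrite eps_lin eps1 mulr1 addNr.
  have ny : y \isn't a GRing.unit by apply/negP=> /eps_unit; rewrite ey eqxx.
  have := loc nu ny.
  have -> : u + y = 1.
    by rewrite /u /y addrA subrK scalerDl scale1r addrK.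
  by rewrite unitr1.
have : w = m (u^-1 * u) w by rewrite mulVr // m1.
rewrite mM mu0.
have -> : m u^-1 0 = 0 by apply: (lin0 (m_linr u^-1)).
by move=> w00; move: w0; rewrite w00 eqxx.
Qed.
End Inv.

Lemma vexp (R : fieldType) (V : vectType R) (v : V) :
  v = \sum_(i < \dim {:V}) coord (vbasis fullv) i v *: bvec i.
Proof.
rewrite {1}(coord_vbasis (memvf v)); apply: eq_bigr => i _.
by rewrite /bvec (tnth_nth 0).
Qed.

Lemma coord_bvec (R : fieldType) (V : vectType R) (i j : 'I_(\dim {:V})) :
  coord (vbasis fullv) j (bvec i) = (i == j)%:R.
Proof.
rewrite /bvec (tnth_nth 0); apply: coord_free.
exact: (basis_free (vbasisP fullv)).
Qed.

Lemma coord_sum_basis (R : fieldType) (V : vectType R) (x : 'I_(\dim {:V}) -> R) j :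
  coord (vbasis fullv) j (\sum_k x k *: bvec k) = x j.
Proof.
rewrite raddf_sum (bigD1 j) //= linearZ /= coord_bvec eqxx mulr1 big1 ?addr0 //.
by move=> k nk; rewrite linearZ /= coord_bvec (negbTE nk) mulr0.
Qed.

Section Main.
Variables (R : fieldType) (H : falgType R) (HA : hopf_algebra H) (S : falgType R).
Variable (act : H -> S -> S).
Hypotheses (loc : local_algebra H) (ext : H_extension HA act)
  (faith : faithful_action act).

Local Notation n := (\dim {:S}).
Local Notation d := (\dim {:H}).

Let MA := ext.1.
Let actL h : forall a s t, act h (a *: s + t) = a *: act h s + act h t.
Proof. by move=> a s t; apply: (act_linr MA). Qed.
Let actR s : forall a h k, act (a *: h + k) s = a *: act h s + act k s.
Proof. by move=> a h k; apply: (act_linl MA). Qed.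

Definition realized (F : S -> S) := exists X : 'M[R]_(n, d),
  forall u, \sum_i \sum_j X i j *: (bvec i * act (bvec j) u) = F u.

Lemma real_ext F G : realized F -> (forall u, F u = G u) -> realized G.
Proof. by move=> [X HX] FG; exists X => u; rewrite HX. Qed.

Lemma real_add F G : realized F -> realized G -> realized (fun u => F u + G u).
Proof.
move=> [X HX] [Y HY]; exists (X + Y) => u; rewrite -HX -HY -big_split.
apply: eq_bigr => i _; rewrite -big_split; apply: eq_bigr => j _.
by rewrite mxE scalerDl.
Qed.

Lemma real_scale a F : realized F -> realized (fun u => a *: F u).
Proof.
move=> [X HX]; exists (a *: X) => u; rewrite -HX scaler_sumr.
apply: eq_bigr => i _; rewrite scaler_sumr; apply: eq_bigr => j _.
by rewrite mxE scalerA.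
Qed.

Lemma real0 : realized (fun _ => 0).
Proof. by exists 0 => u; rewrite big1 // => i _; rewrite big1 // => j _; rewrite mxE scale0r. Qed.

Lemma real_sum I (r : seq I) (F : I -> S -> S) :
  (forall i, realized (F i)) -> realized (fun u => \sum_(i <- r) F i u).
Proof.
move=> HF; elim: r => [|x r IH].
  by apply: real_ext real0 _ => u; rewrite big_nil.
apply: real_ext (real_add (HF x) IH) _ => u; by rewrite big_cons.
Qed.

Lemma real_basic s g : realized (fun u => s * act g u).
Proof.
exists (\matrix_(i, j) (coord (vbasis fullv) i s * coord (vbasis fullv) j g)) => u.
rewrite [in RHS](vexp s) [in RHS](vexp g) (lin_sum (actR u)) mulr_suml.
apply: eq_bigr => i _; rewrite -scalerAl mulr_sumr scaler_sumr.
apply: eq_bigr => j _; rewrite mxE (linZ (actR u)) -scalerAr scalerA //.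
Qed.


Lemma real_lam lam s t g : realized (fun u => s * act lam (t * act g u)).
Proof.
pose D := comul HA lam.
have E : forall u, s * act lam (t * act g u) =
  \sum_(a < d) \sum_(b < d) D a b *: ((s * act (bvec a) t) * act (bvec b * g) u).
  move=> u; rewrite (act_mul MA) /contr mulr_sumr; apply: eq_bigr => a _.
  rewrite mulr_sumr; apply: eq_bigr => b _.
  by rewrite -scalerAr (actM MA) mulrA.
apply: real_ext (fun u => esym (E u)).
apply: real_sum => a; apply: real_sum => b; apply: real_scale; exact: real_basic.
Qed.

Lemma alg_inj (r s : R) : r%:A = s%:A :> S -> r = s.
Proof.
move/eqP; rewrite -subr_eq0 -scalerBl scaler_eq0 oner_eq0 orbF subr_eq0.
by move/eqP.
Qed.

Variable lam : H.
Hypotheses (lam_int : left_integral HA lam) (lam0 : lam != 0).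

Lemma lam_inv x : Defs.invariant HA act (act lam x).
Proof. by move=> h; rewrite -(actM MA) lam_int (linZ (actR x)). Qed.

Lemma lam_ex x : exists r : R, act lam x == r%:A.
Proof. by have [r ->] := (ext.2 _).1 (lam_inv x); exists r. Qed.

Definition phi x := xchoose (lam_ex x).
Lemma phiE x : act lam x = (phi x)%:A.
Proof. exact: (eqP (xchooseP (lam_ex x))). Qed.

Lemma lam_nz : exists t, act lam t != 0.
Proof.
case: (boolP [forall k : 'I_n, act lam (bvec k) == 0]) => [/forallP Hk|].
  exfalso; move/negP: lam0; apply; apply/eqP; apply: faith => s.
  rewrite (vexp s) (lin_sum (actL lam)) big1 // => k _.
  by rewrite (linZ (actL lam)) (eqP (Hk k)) scaler0.
by move/forallPn=> [k Hk]; exists (bvec k).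
Qed.

Lemma lin_F (e : S) (g : H) :
  forall a v w, act lam (e * act g (a *: v + w)) =
    a *: act lam (e * act g v) + act lam (e * act g w).
Proof. by move=> a v w; rewrite actL mulrDr -scalerAr actL. Qed.

Lemma vanish v : (forall (a : 'I_n) (c : 'I_d), act lam (bvec a * act (bvec c) v) = 0) ->
  forall t g, act lam (t * act g v) = 0.
Proof.
move=> Hv t g; rewrite (vexp t) (vexp g) (lin_sum (actR v)) mulr_suml.
rewrite (lin_sum (actL lam)) big1 // => a _.
rewrite -scalerAl (linZ (actL lam)) mulr_sumr (lin_sum (actL lam)) big1 ?scaler0 // => c _.
by rewrite (linZ (actR v)) -scalerAr (linZ (actL lam)) Hv scaler0.
Qed.

Definition Fp (p : 'I_n * 'I_d) (v : S) := act lam (bvec p.1 * act (bvec p.2) v).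
Definition W : {vspace S} := (\bigcap_(p : 'I_n * 'I_d) lker (linfun (Fp p)))%VS.

Lemma memW v : v \in W <-> (forall (a : 'I_n) (c : 'I_d), act lam (bvec a * act (bvec c) v) = 0).
Proof.
rewrite memvE; split.
  move/subv_bigcapP=> Hp a c; have := Hp (a, c) isT; rewrite -memvE memv_ker.
  by rewrite (linfunE' (lin_F _ _)) => /eqP.
move=> Hv; apply/subv_bigcapP => [[a c]] _; rewrite -memvE memv_ker.
by rewrite (linfunE' (lin_F _ _)) /= Hv.
Qed.

Lemma W0 : W = 0%VS.
Proof.
apply/eqP; apply/negPn/negP => W0.
have [|w [wW w0 winv]] := @exists_invariant R H S act (counit HA)
  (act_linl MA) (fun h a v w => act_linr MA a h v w) (act1 MA) (actM MA)
  (counit_lin HA) (counit1 HA) (counitM HA) loc W W0.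
  move=> h u /memW Hu; apply/memW => a c; rewrite -(actM MA); exact: vanish.
have [r wr] := (ext.2 w).1 winv.
have r0 : r != 0 by apply: contraNneq w0 => r0; rewrite wr r0 scale0r.
have [t nt] := lam_nz.
have := vanish (proj1 (memW w) wW) t 1.
rewrite (act1 MA) wr mulr_algr (linZ (actL lam)) => /eqP; rewrite scaler_eq0.
by rewrite (negbTE r0) (negbTE nt).
Qed.

Local Notation K := #|{: 'I_n * 'I_d}|.
Definition psi (r : 'I_K) (u : S) := phi (bvec (enum_val r).1 * act (bvec (enum_val r).2) u).
Definition Q : 'M[R]_(n, K) := \matrix_(k, r) psi r (bvec k).

Lemma psi_sum r (x : 'I_n -> R) :
  \sum_k x k * psi r (bvec k) = psi r (\sum_k x k *: bvec k).
Proof.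
apply: alg_inj; rewrite /psi -phiE (lin_sum (lin_F _ _)) scaler_suml.
apply: eq_bigr => k _.
by rewrite -scalerA -phiE (linZ (lin_F _ _)).
Qed.

Lemma Qfree : row_free Q.
Proof.
rewrite -kermx_eq0 -submx0; apply/row_subP => i.
set x := row i (kermx Q).
have xQ : x *m Q = 0 by apply/sub_kermxP; exact: row_sub.
suff -> : x = 0 by exact: sub0mx.
pose u := \sum_k x 0 k *: bvec k.
have uW : u \in W.
  apply/memW => a c.
  have := congr1 (fun M : 'M[R]_(1, K) => M 0 (enum_rank (a, c))) xQ.
  rewrite !mxE (eq_bigr (fun k => x 0 k * psi (enum_rank (a,c)) (bvec k))); last first.
    by move=> k _; rewrite ?mxE.
  rewrite psi_sum /psi enum_rankK /= => ph0.
  by move: (phiE (bvec a * act (bvec c) u)); rewrite ph0 scale0r.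
rewrite W0 memv0 in uW.
apply/rowP => k; rewrite mxE.
have := congr1 (coord (vbasis fullv) k) (eqP uW); rewrite linear0 /u coord_sum_basis.
by rewrite /x !mxE.
Qed.

Lemma coordB : exists B : 'M[R]_(K, n),
  forall u k, coord (vbasis fullv) k u = \sum_r psi r u * B r k.
Proof.
have [B QB] := row_freeP Qfree; exists B => u k.
pose x : 'rV[R]_n := \row_j coord (vbasis fullv) j u.
have xE : x = (x *m Q) *m B by rewrite -mulmxA QB mulmx1.
have := congr1 (fun M : 'rV[R]_n => M 0 k) xE; rewrite /= !mxE => ->.
apply: eq_bigr => r _; congr (_ * _); rewrite mxE.
rewrite (eq_bigr (fun j => coord (vbasis fullv) j u * psi r (bvec j))); last first.
  by move=> j _; rewrite !mxE.
by rewrite psi_sum -vexp.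
Qed.

Lemma real_all (f : 'End(S)) : realized f.
Proof.
have [B HB] := coordB.
have E : forall u, f u = \sum_k \sum_r B r k *: (f (bvec k) *
    act lam (bvec (enum_val r).1 * act (bvec (enum_val r).2) u)).
  move=> u; rewrite {1}(vexp u) linear_sum; apply: eq_bigr => k _.
  rewrite linearZ /= HB scaler_suml; apply: eq_bigr => r _.
  by rewrite phiE mulr_algr scalerA mulrC.
apply: real_ext (fun u => esym (E u)).
apply: real_sum => k; apply: real_sum => r; apply: real_scale; exact: real_lam.
Qed.

Lemma gm_fun_lin (X : 'M[R]_(n, d)) : forall a t t',
  (fun t => \sum_i \sum_j X i j *: (bvec i * act (bvec j) t)) (a *: t + t') =
  a *: (fun t => \sum_i \sum_j X i j *: (bvec i * act (bvec j) t)) t +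
  (fun t => \sum_i \sum_j X i j *: (bvec i * act (bvec j) t)) t'.
Proof.
move=> a t t' /=; rewrite scaler_sumr -big_split; apply: eq_bigr => i _.
rewrite scaler_sumr -big_split; apply: eq_bigr => j _.
by rewrite actL mulrDr -scalerAr scalerDr !scalerA mulrC.
Qed.

Lemma gmE X u : galois_map act X u = \sum_i \sum_j X i j *: (bvec i * act (bvec j) u).
Proof. exact: (linfunE' (gm_fun_lin X)). Qed.

Lemma G_lin : forall a X Y, galois_map act (a *: X + Y) = a *: galois_map act X + galois_map act Y.
Proof.
move=> a X Y; apply/lfunP => u; rewrite add_lfunE scale_lfunE !gmE.
rewrite scaler_sumr -big_split; apply: eq_bigr => i _.
rewrite scaler_sumr -big_split; apply: eq_bigr => j _.
by rewrite mxE mxE scalerDl scalerA.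
Qed.

Lemma galois_bij : d = n -> hopf_galois act.
Proof.
move=> dims.
pose G : 'Hom('M[R]_(n, d), 'End(S)) := linfun (galois_map act).
have GE X : G X = galois_map act X := linfunE' G_lin X.
have surj f : exists X, galois_map act X = f.
  have [X HX] := real_all f; exists X; apply/lfunP => u; by rewrite gmE HX.
have img : limg G = fullv.
  apply/eqP; rewrite eqEsubv subvf /=; apply/subvP => f _.
  have [X <-] := surj f; rewrite -GE; apply: memv_img; exact: memvf.
have ker : lker G == 0%VS.
  have e1 : \dim (fullv : {vspace 'M[R]_(n, d)}) = (n * d)%N by rewrite dimvf dim_matrix.
  have e2 : \dim (fullv : {vspace 'End(S)}) = (n * n)%N.
    by rewrite !dimvf.
  have := limg_ker_dim G fullv; rewrite capfv img e1 e2 -dimv_eq0.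
  move: (\dim (lker G)) => k; rewrite dims.
  by rewrite -{2}[(n * n)%N]add0n => /addIn ->.
exists (fun f => (G^-1)%VF f).
  by move=> X; rewrite -GE lker0_lfunK.
by move=> f; rewrite -GE limg_lfunVK // img memvf.
Qed.

End Main.

Theorem mainTheorem3 (R : fieldType) (H : falgType R) (HA : hopf_algebra H)
  (S : falgType R) (act : H -> S -> S) :
  local_algebra H -> cocommutative HA ->
  H_extension HA act -> faithful_action act ->
  \dim {:H} = \dim {:S} ->
  (hopf_galois act <-> hopfological_homology_zero HA act).
Proof.
move=> loc _ ext faith dims.
have mlinl : forall a (h k v : H), (a *: h + k) * v = a *: (h * v) + k * v.
  by move=> *; rewrite mulrDl scalerAl.
have mlinr : forall (h : H) a v w, h * (a *: v + w) = a *: (h * v) + h * w.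
  by move=> *; rewrite mulrDr scalerAr.
have mM : forall h k v : H, h * k * v = h * (k * v) by move=> *; rewrite mulrA.
have f0 : (fullv : {vspace H}) != 0%VS.
  by apply/eqP => f0; have := memvf (1 : H); rewrite f0 memv0 oner_eq0.
have [|lam [_ lam0 lamI]] := @exists_invariant R H H (fun h v => h * v) (counit HA)
  mlinl mlinr (@mul1r H) mM (counit_lin HA) (counit1 HA) (counitM HA) loc fullv f0.
  by move=> *; exact: memvf.
have lam_int : left_integral HA lam := lamI.
split => _; last exact: (galois_bij loc ext faith lam_int lam0 dims).
move=> s /((ext.2 s).1) [r ->].
have [t nt] := lam_nz ext faith lam0.
have p0 : phi ext lam_int t != 0.
  by apply: contraNneq nt => p0; rewrite (phiE ext lam_int) p0 scale0r.
exists 1%N, (fun _ => r / phi ext lam_int t), (fun _ => lam), (fun _ => t).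
split=> [k|]; first exact: lam_int.
by rewrite big_ord1 (phiE ext lam_int) scalerA divfK.
Qed.
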